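(* Let $\Bbbk$ be algebraically closed, $T$ a torus acting linearly on a finite-dimensional $\Bbbk$-vector space $V$, $X\subseteq\mathbb PV$ a closed $T$-invariant subscheme with $X^T$ finite, and $S:\mathbb G_m\to T$ with $X^S=X^T$. If $X=\bigcup_iX_i$ is the decomposition into irreducible components, then $\Delta(X,S)=\bigcup_i\Delta(X_i,S)$.
   Context: For a closed $S$-invariant $Z\subseteq\mathbb PV$ with finitely many fixed points and $f\in Z^S$, $Z_f=\{z\in Z:\lim_{t\to0}S(t)z=f\}$ is the B-B stratum; $\overline{Z_\emptyset}=Z$, $\overline{Z_{f_0,\ldots,f_k}}=\overline{\overline{Z_{f_0,\ldots,f_{k-1}}}\cap Z_{f_k}}$. A closure chain of $Z$ is a nonrepeating $(f_0,\ldots,f_k)$ in $Z^S$ with $\overline{Z_{f_0,\ldots,f_k}}\ne\emptyset$, and $\Delta(Z,S)$ is the simplicial complex of closure chains regarded as subsets of $Z^S$. *)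

(* Defs.v *)
From HB Require Import structures.
From mathcomp Require Import all_boot all_order all_algebra.
From mathcomp Require Import mpoly.
Set Implicit Arguments. Unset Strict Implicit. Unset Printing Implicit Defensive.
Import Order.TTheory GRing.Theory Num.Theory.
Local Open Scope ring_scope.

(* V = k^n (row vectors), PV = P^{n-1}; a point of PV is represented by its
   unique normalized representative: nonzero, first nonzero coordinate = 1. *)
Section Proj.
Variables (k : closedFieldType) (n : nat).

Definition pnorm (v : 'rV[k]_n) : 'rV[k]_n :=
  if [pick i | v 0 i != 0] is Some i then (v 0 i)^-1 *: v else v.

Definition proj := {v : 'rV[k]_n | (v != 0) && (pnorm v == v)}.

Definition rep (v : 'rV[k]_n) (x : proj) : Prop := v != 0 /\ pnorm v = val x.

Definition pset := proj -> Prop.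
Definition psub (A B : pset) := forall x, A x -> B x.

Definition homogeneous (p : {mpoly k[n]}) : Prop :=
  exists d, all (fun m => mdeg m == d) (msupp p).

Definition pclosed (Z : pset) : Prop :=
  exists F : {mpoly k[n]} -> Prop,
    (forall p, F p -> homogeneous p) /\
    forall x : proj, Z x <-> (forall p, F p -> p.@[fun i => val x 0 i] = 0).

Definition pclosure (Z : pset) : pset :=
  fun x => forall C, pclosed C -> psub Z C -> C x.

Definition irreducible (Z : pset) : Prop :=
  [/\ pclosed Z, exists x, Z x &
      forall A B, pclosed A -> pclosed B -> psub Z (fun x => A x \/ B x) ->
        psub Z A \/ psub Z B].

Definition irr_component (Y X : pset) : Prop :=
  [/\ irreducible Y, psub Y X &
      forall Y', irreducible Y' -> psub Y Y' -> psub Y' X -> psub Y' Y].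

(* Linear action of the torus T = G_m^r on V: diagonalizable with weights
   w i : Z^r in the basis given by the rows of an invertible matrix P. *)
Variables (r : nat) (w : 'I_n -> 'I_r -> int) (P : 'M[k]_n).

Definition torus_elt (t : 'I_r -> k) : Prop := forall j, t j != 0.

Definition rho (t : 'I_r -> k) : 'M[k]_n :=
  invmx P *m diag_mx (\row_i \prod_(j < r) t j ^ w i j) *m P.

Definition T_invariant (Z : pset) : Prop :=
  forall t x y, torus_elt t -> Z x -> rep (val x *m rho t) y -> Z y.

Definition T_fixed (Z : pset) : pset :=
  fun x => Z x /\ forall t, torus_elt t -> rep (val x *m rho t) x.

(* one-parameter subgroup S : G_m -> T given by a cocharacter s : Z^r *)
Variable (s : 'I_r -> int).

Definition rhoS (c : k) : 'M[k]_n := rho (fun j => c ^ s j).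

Definition S_fixed (Z : pset) : pset :=
  fun x => Z x /\ forall c : k, c != 0 -> rep (val x *m rhoS c) x.

(* lim_{t -> 0} S(t) z = f : the orbit map G_m -> PV, t |-> S(t) z, extends
   to A^1 (given by a polynomial vector q with q(0) != 0) and sends 0 to f. *)
Definition lim0 (z f : proj) : Prop :=
  exists q : 'I_n -> {poly k},
    rep (\row_i (q i).[0]) f /\
    forall c : k, c != 0 ->
      exists a : k, a != 0 /\ \row_i (q i).[c] = a *: (val z *m rhoS c).

Definition BBstratum (Z : pset) (f : proj) : pset :=
  fun z => Z z /\ lim0 z f.

(* closure of Z_{f_0,...,f_k}:  Z for the empty chain, and
   closure (closure(Z_{f_0..f_{k-1}}) /\ Z_{f_k}) recursively *)
Definition chain_closure (Z : pset) (fs : seq proj) : pset :=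
  foldl (fun C f => pclosure (fun z => C z /\ BBstratum Z f z)) Z fs.

Definition closure_chain (Z : pset) (fs : seq proj) : Prop :=
  [/\ fs != [::], uniq fs, (forall f, f \in fs -> S_fixed Z f) &
      exists x, chain_closure Z fs x].

(* faces of Delta(Z,S): subsets of Z^S (given as predicates) that are the
   underlying sets of closure chains *)
Definition Delta (Z : pset) (sigma : pset) : Prop :=
  exists fs, closure_chain Z fs /\ forall x, sigma x <-> x \in fs.

End Proj.

(* Main.v *)
Require Import Defs.
From HB Require Import structures.
From mathcomp Require Import all_boot all_order all_algebra zify ring.
From mathcomp Require Import mpoly.
From Stdlib Require Import Classical.
Set Implicit Arguments. Unset Strict Implicit. Unset Printing Implicit Defensive.
Import Order.TTheory GRing.Theory Num.Theory.
Local Open Scope ring_scope.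

Section Basic.
Variables (k : closedFieldType) (n : nat).

Lemma pnorm_scale (v : 'rV[k]_n) : exists2 a : k, a != 0 & pnorm v = a *: v.
Proof.
rewrite /pnorm; case: pickP => [i Hi|_]; last by exists 1; rewrite ?oner_eq0 ?scale1r.
by exists (v 0 i)^-1; rewrite // invr_eq0.
Qed.

Lemma pnormZ (a : k) (v : 'rV[k]_n) : a != 0 -> pnorm (a *: v) = pnorm v.
Proof.
move=> a0; rewrite /pnorm.
have -> : [pick i | (a *: v) 0 i != 0] = [pick i | v 0 i != 0].
  by apply: eq_pick => i /=; rewrite mxE mulf_eq0 (negbTE a0).
case: pickP => [i Hi|H]; first by rewrite mxE scalerA invfM mulrAC mulVf // mul1r.
have -> : v = 0 by apply/matrixP => p q; rewrite (ord1 p) mxE; move/negbFE/eqP: (H q).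
by rewrite scaler0.
Qed.

Lemma pnorm_neq0 (v : 'rV[k]_n) : v != 0 -> pnorm v != 0.
Proof. by case: (pnorm_scale v) => a a0 ->; rewrite scaler_eq0 negb_or a0. Qed.

Lemma proj_exists (v : 'rV[k]_n) : v != 0 -> exists y : proj k n, rep v y.
Proof.
move=> v0; have h : (pnorm v != 0) && (pnorm (pnorm v) == pnorm v).
  rewrite (pnorm_neq0 v0) /=.
  by case: (pnorm_scale v) => a a0 e; have := pnormZ v a0; rewrite -e => ->.
by exists (exist (fun v : 'rV[k]_n => (v != 0) && (pnorm v == v)) _ h).
Qed.

Lemma homogP' (p : {mpoly k[n]}) : homogeneous p -> exists d, p \is d.-homog.
Proof. by case=> d h; exists d; rewrite dhomogE. Qed.

Lemma meval_homogZ (p : {mpoly k[n]}) d (a : k) (f : 'I_n -> k) :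
  p \is d.-homog -> p.@[fun i => a * f i] = a ^+ d * p.@[f].
Proof.
move=> /dhomogP hp; rewrite !mevalE mulr_sumr; apply: eq_big_seq => m hm.
rewrite [RHS]mulrCA; congr (_ * _).
under eq_bigr do rewrite exprMn.
by rewrite big_split /= prodrXr -mdegE hp.
Qed.

Definition ev (p : {mpoly k[n]}) (v : 'rV[k]_n) := p.@[fun i => v 0 i].

Lemma evZ (p : {mpoly k[n]}) d a v : p \is d.-homog -> ev p (a *: v) = a ^+ d * ev p v.
Proof.
move=> hp; rewrite /ev -meval_homogZ //; apply: meval_eq => i; by rewrite mxE.
Qed.

Lemma evZ0 (p : {mpoly k[n]}) a v : homogeneous p -> a != 0 ->
  (ev p (a *: v) = 0 <-> ev p v = 0).
Proof.
move=> /homogP' [d hp] a0; rewrite (evZ _ _ hp); split; last by move->; rewrite mulr0.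
by move/eqP; rewrite mulf_eq0 expf_eq0 (negbTE a0) andbF /= => /eqP.
Qed.

Lemma ev_rep (p : {mpoly k[n]}) v (y : proj k n) : rep v y -> homogeneous p ->
  (ev p (val y) = 0 <-> ev p v = 0).
Proof.
case=> _ <- hp; case: (pnorm_scale v) => a a0 ->; exact: evZ0.
Qed.

Definition zs (F : {mpoly k[n]} -> Prop) (v : 'rV[k]_n) := forall p, F p -> ev p v = 0.

Lemma closed_rep (Z : pset k n) F v y :
  (forall p, F p -> homogeneous p) ->
  (forall x : proj k n, Z x <-> (forall p, F p -> p.@[fun i => val x 0 i] = 0)) ->
  rep v y -> (Z y <-> zs F v).
Proof.
move=> hF hZ hr; rewrite hZ; split=> H p Fp.
  exact: (proj1 (ev_rep hr (hF _ Fp))) (H _ Fp).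
exact: (proj2 (ev_rep hr (hF _ Fp))) (H _ Fp).
Qed.

Lemma exists_notin (l : seq k) : exists c, c \notin l.
Proof.
have nz : \prod_(z <- l) ('X - z%:P) != 0 :> {poly k}.
  by apply: monic_neq0; apply: monic_prod_XsubC.
case/closed_nonrootP: nz => x; rewrite root_prod_XsubC => h; by exists x.
Qed.

Lemma poly_roots_fin (Q : {poly k}) : Q != 0 -> exists r : seq k, forall c, Q.[c] = 0 -> c \in r.
Proof.
move=> Q0; case: (closed_field_poly_normal Q) => r e; exists r => c hc.
rewrite -root_prod_XsubC; move: hc; rewrite {1}e hornerZ => /eqP.
by rewrite mulf_eq0 lead_coef_eq0 (negbTE Q0).
Qed.

Lemma poly_zero_inf (Q : {poly k}) :
  (forall l : seq k, exists c, c \notin l /\ Q.[c] = 0) -> Q = 0.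
Proof.
move=> H; apply/eqP; apply/negPn/negP => /poly_roots_fin [r hr].
by case: (H r) => c [/negP nc /hr].
Qed.

Lemma mpoly_poly (p : {mpoly k[n]}) (q : 'I_n -> {poly k}) :
  exists Q : {poly k}, forall c, Q.[c] = p.@[fun i => (q i).[c]].
Proof.
exists (\sum_(m <- msupp p) (p@_m)%:P * \prod_i (q i) ^+ m i) => c.
rewrite mevalE horner_sum; apply: eq_bigr => m _.
rewrite hornerM hornerC horner_prod; congr (_ * _); apply: eq_bigr => i _.
by rewrite horner_exp.
Qed.
End Basic.

Section Rho.
Variables (k : closedFieldType) (n r : nat) (w : 'I_n -> 'I_r -> int) (P : 'M[k]_n)
  (s : 'I_r -> int).
Hypothesis PU : P \in unitmx.

Lemma rho_unit t : torus_elt t -> rho w P t \in unitmx.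
Proof.
move=> ht; rewrite /rho !unitmx_mul unitmx_inv PU andbT /= unitmxE det_diag unitfE.
rewrite prodf_seq_neq0; apply/allP => i _ /=; rewrite mxE prodf_seq_neq0.
by apply/allP => j _ /=; apply: expfz_neq0; apply: ht.
Qed.

Lemma torusS (c : k) : c != 0 -> torus_elt (fun j => c ^ s j).
Proof. by move=> c0 j; apply: expfz_neq0. Qed.

Lemma mulrho_neq0 t (v : 'rV[k]_n) : torus_elt t -> v != 0 -> v *m rho w P t != 0.
Proof.
move=> ht; apply: contraNneq => h.
by rewrite -(mulmxK (rho_unit ht) v) h mul0mx.
Qed.

Lemma rhoS1 : rhoS w P s 1 = 1%:M.
Proof.
rewrite /rhoS /rho.
have -> : (\row_i \prod_(j < r) (1 ^ s j) ^ w i j) = const_mx (1 : k).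
  apply/matrixP => a b; rewrite !mxE big1 // => j _; by rewrite !exp1rz.
by rewrite diag_const_mx mulmx1 mulVmx.
Qed.

Lemma laurent (v : 'rV[k]_n) : exists (M : nat) (q : 'I_n -> {poly k}),
  forall c, c != 0 -> forall l, (q l).[c] = c ^+ M * (v *m rhoS w P s c) 0 l.
Proof.
pose e i := \sum_(j < r) s j * w i j.
pose M := (\sum_i absz (e i))%N.
pose N i := absz (M%:Z + e i).
pose u := v *m invmx P.
exists M, (fun l => \sum_i (u 0 i * P i l) *: 'X^(N i)) => c c0 l.
have cu : c \is a GRing.unit by rewrite unitfE.
have hN i : c ^+ N i = c ^+ M * c ^ e i.
  have hle : (absz (e i) <= M)%N by rewrite /M (bigD1 i) //= leq_addr.
  have h0 : 0 <= M%:Z + e i by lia.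
  have hNi : (N i)%:Z = M%:Z + e i by rewrite /N; lia.
  by rewrite -[c ^+ N i]/(c ^ ((N i)%:Z)) hNi exprzDr.
have hd i : \prod_(j < r) (c ^ s j) ^ w i j = c ^ e i.
  rewrite /e; elim/big_rec2: _ => [|j y1 y2 _ ->]; first by rewrite expr0z.
  by rewrite exprz_exp exprzDr.
rewrite /rhoS /rho !mulmxA -/u mxE horner_sum mulr_sumr; apply: eq_bigr => i _.
rewrite hornerZ hornerXn hN mul_mx_diag !mxE hd; ring.
Qed.
End Rho.

Section Topo.
Variables (k : closedFieldType) (n : nat).
Implicit Types (A B C Z : pset k n).

Lemma pclosed_ext A B : (forall x, A x <-> B x) -> pclosed A -> pclosed B.
Proof. move=> e [F [hF hA]]; exists F; split=> // x; rewrite -e; exact: hA. Qed.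

Lemma homogI (p : {mpoly k[n]}) d : p \is d.-homog -> homogeneous p.
Proof. by move=> h; exists d; rewrite -dhomogE. Qed.

Lemma pclosed0 : pclosed (fun _ : proj k n => False).
Proof.
exists (fun p => p = 1); split.
  by move=> p ->; apply: homogI; apply: dhomog1.
move=> x; split=> // /(_ 1 erefl); rewrite meval1 => /eqP; by rewrite oner_eq0.
Qed.


Lemma pclosedU A B : pclosed A -> pclosed B -> pclosed (fun x => A x \/ B x).
Proof.
move=> [FA [hFA hA]] [FB [hFB hB]].
exists (fun p => exists a b, [/\ FA a, FB b & p = a * b]); split.
  move=> p [a [b [Fa Fb ->]]].
  case/homogP': (hFA _ Fa) => da ha; case/homogP': (hFB _ Fb) => db hb.
  exact: homogI (dhomogM ha hb).
move=> x; rewrite hA hB; split.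
  by move=> [H|H] p [a [b [Fa Fb ->]]]; rewrite mevalM ?(H _ Fa) ?(H _ Fb) ?mul0r ?mulr0.
move=> H. apply: NNPP. move=> /not_or_and. move=> [nA nB].
case: (not_all_ex_not _ _ nA) => a ha; case: (imply_to_and _ _ ha) => Fa na.
case: (not_all_ex_not _ _ nB) => b hb; case: (imply_to_and _ _ hb) => Fb nb.
have := H _ (ex_intro _ a (ex_intro _ b (And3 Fa Fb erefl))).
rewrite mevalM => /eqP; rewrite mulf_eq0 => /orP [] /eqP; by [].
Qed.

Lemma pclosed_seqU (I : eqType) (A : I -> pset k n) (l : seq I) :
  (forall i, pclosed (A i)) -> pclosed (fun x => exists i, i \in l /\ A i x).
Proof.
move=> hA; elim: l => [|i l IH].
  by apply: pclosed_ext pclosed0 => x; split=> // [[i []]].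
apply: pclosed_ext (pclosedU (hA i) IH) => x; split.
  by case=> [h|[j [jl h]]]; [exists i; rewrite inE eqxx | exists j; rewrite inE jl orbT].
case=> j []; rewrite inE => /orP [/eqP -> h|jl h]; [by left | by right; exists j].
Qed.

Lemma pclosed_finU (I : finType) (A : I -> pset k n) :
  (forall i, pclosed (A i)) -> pclosed (fun x => exists i, A i x).
Proof.
move=> hA; apply: pclosed_ext (pclosed_seqU (enum I) hA) => x.
by split=> [[i [_ h]]|[i h]]; exists i => //; rewrite mem_enum.
Qed.

Lemma pclosure_closed A : pclosed (pclosure A).
Proof.
exists (fun p => exists C (F : {mpoly k[n]} -> Prop), [/\ pclosed C, psub A C,
   (forall p, F p -> homogeneous p),
   (forall x : proj k n, C x <-> (forall p, F p -> p.@[fun i => val x 0 i] = 0)) & F p]).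
split; first by move=> p [C [F [_ _ hF _ Fp]]]; exact: hF.
move=> x; split.
  move=> H p [C [F [cC sAC hF hC Fp]]]; by apply: (proj1 (hC x)) => //; apply: H.
move=> H C cC sAC; case: (cC) => F [hF hC]; apply/hC => p Fp; apply: H.
by exists C, F.
Qed.

Lemma sub_pclosure A : psub A (pclosure A).
Proof. by move=> x Ax C _ h; apply: h. Qed.

Lemma pclosure_min A C : pclosed C -> psub A C -> psub (pclosure A) C.
Proof. by move=> cC h x; apply. Qed.

Lemma pclosure_mono A B : psub A B -> psub (pclosure A) (pclosure B).
Proof. by move=> h x H C cC hB; apply: H => // y /h /hB. Qed.

Lemma pclosure_ne A x : pclosure A x -> exists y, A y.
Proof.
move=> H; apply: NNPP => ne; have := H _ pclosed0; apply=> y Ay; apply: ne; by exists y.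
Qed.

Lemma pclosure_finU (I : finType) (A : I -> pset k n) x :
  pclosure (fun z => exists i, A i z) x <-> exists i, pclosure (A i) x.
Proof.
split; last first.
  by case=> i; apply: pclosure_mono => z h; exists i.
move=> h; apply: (pclosure_min (C := fun x => exists i, pclosure (A i) x) _ _ h).
  by apply: pclosed_finU => i; apply: pclosure_closed.
by move=> z [i hz]; exists i; apply: sub_pclosure.
Qed.

Lemma irr_finU (I : finType) (Y : pset k n) (Z : I -> pset k n) :
  irreducible Y -> (forall i, pclosed (Z i)) -> psub Y (fun x => exists i, Z i x) ->
  exists i, psub Y (Z i).
Proof.
case=> _ [y0 Yy0] irrY cZ.
suff H : forall l : seq I, psub Y (fun x => exists i, i \in l /\ Z i x) ->
   exists i, psub Y (Z i).
  by move=> h; apply: (H (enum I)) => x /h [i hi]; exists i; rewrite mem_enum.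
elim=> [|i l IH] h; first by case: (h _ Yy0) => i [].
have := irrY (Z i) _ (cZ i) (pclosed_seqU l cZ).
case.
- move=> x /h [j []]; rewrite inE => /orP [/eqP ->|jl hj]; first by left.
  by right; exists j.
- by move=> hi; exists i.
- exact: IH.
Qed.
End Topo.

Section Orbit.
Variables (k : closedFieldType) (n r : nat) (w : 'I_n -> 'I_r -> int) (P : 'M[k]_n)
  (s : 'I_r -> int).
Hypothesis PU : P \in unitmx.
Notation rS := (rhoS w P s).

Lemma notin_nz (l : seq k) : exists c, c \notin l /\ c != 0.
Proof.
case: (exists_notin (0 :: l)) => c; rewrite inE negb_or => /andP [c0 cl].
by exists c.
Qed.

Lemma orbit_zero (F : {mpoly k[n]} -> Prop) (v : 'rV[k]_n) :
  (forall p, F p -> homogeneous p) ->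
  (forall l : seq k, exists c, [/\ c \notin l, c != 0 & zs F (v *m rS c)]) ->
  forall c, c != 0 -> zs F (v *m rS c).
Proof.
move=> hF H c c0 p Fp.
case: (@laurent _ _ _ w P s PU v) => M [q hq].
case/homogP': (hF p Fp) => d hd; case: (mpoly_poly p q) => Q hQ.
have HQ x : x != 0 -> Q.[x] = x ^+ (M * d) * ev p (v *m rS x).
  move=> x0; rewrite hQ exprM -(evZ _ _ hd); apply: meval_eq => i.
  by rewrite mxE hq.
have Q0 : Q = 0.
  apply: poly_zero_inf => l; case: (H l) => x [xl x0 zx].
  by exists x; split=> //; rewrite HQ // zx // mulr0.
move/eqP: (HQ c c0); rewrite Q0 horner0 eq_sym mulf_eq0 expf_eq0 (negbTE c0) andbF /=.
by move/eqP.
Qed.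

Lemma limit_closed (Y : pset k n) (F : {mpoly k[n]} -> Prop) z f :
  (forall p, F p -> homogeneous p) ->
  (forall x : proj k n, Y x <-> (forall p, F p -> p.@[fun i => val x 0 i] = 0)) ->
  (forall y, Y y -> forall c, c != 0 -> zs F (val y *m rS c)) ->
  Y z -> lim0 w P s z f -> Y f.
Proof.
move=> hF hY Hinv Yz [q [hf hq]].
apply/(proj2 (closed_rep hF hY hf)) => p Fp.
case/homogP': (hF p Fp) => d hd; case: (mpoly_poly p q) => Q hQ.
have HQ x : Q.[x] = ev p (\row_i (q i).[x]).
  by rewrite hQ; apply: meval_eq => i; rewrite mxE.
have Q0 : Q = 0.
  apply: poly_zero_inf => l; case: (notin_nz l) => x [xl x0].
  exists x; split=> //; rewrite HQ; case: (hq x x0) => a [a0 ->].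
  by rewrite (evZ _ _ hd) (Hinv _ Yz x x0) // mulr0.
by rewrite -HQ Q0 horner0.
Qed.
End Orbit.

Section Translate.
Variables (k : closedFieldType) (n r : nat) (w : 'I_n -> 'I_r -> int) (P : 'M[k]_n)
  (s : 'I_r -> int).
Notation rS := (rhoS w P s).

Lemma comp_homog (p : {mpoly k[n]}) d (lq : n.-tuple {mpoly k[n]}) :
  p \is d.-homog -> (forall i, tnth lq i \is 1.-homog) -> p \mPo lq \is d.-homog.
Proof.
move=> /dhomogP hp hl; rewrite comp_mpolyE big_seq; apply: rpred_sum => m hm.
apply: rpredZ; rewrite -(hp m hm).
have H : forall J : seq 'I_n,
  \prod_(i <- J) tnth lq i ^+ m i \is (\sum_(i <- J) m i)%N.-homog.
  elim=> [|i J IH]; first by rewrite !big_nil; apply: dhomog1.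
  rewrite !big_cons; apply: dhomogM => //.
  by have := dhomogMn (m i) (hl i); rewrite mul1n.
by have := H (index_enum _); rewrite -mdegE.
Qed.

Definition Lt (M : 'M[k]_n) : n.-tuple {mpoly k[n]} :=
  [tuple \sum_(l < n) M l i *: 'X_l | i < n].

Lemma Lt_homog M i : tnth (Lt M) i \is 1.-homog.
Proof.
rewrite tnth_mktuple; apply: rpred_sum => l _; apply: rpredZ.
by rewrite dhomogX; apply/eqP; exact: mdeg1.
Qed.

Lemma Lt_eval (p : {mpoly k[n]}) M (v : 'rV[k]_n) :
  (p \mPo Lt M).@[fun i => v 0 i] = ev p (v *m M).
Proof.
rewrite comp_mpoly_meval /ev; apply: meval_eq => i.
rewrite tnth_mktuple raddf_sum mxE; apply: eq_bigr => l _.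
by rewrite /= mevalZ mevalXU mulrC.
Qed.

Lemma pclosedI (A B : pset k n) : pclosed A -> pclosed B -> pclosed (fun x => A x /\ B x).
Proof.
move=> [FA [hFA hA]] [FB [hFB hB]]; exists (fun p => FA p \/ FB p); split.
  by move=> p [] ?; [apply: hFA | apply: hFB].
move=> x; rewrite hA hB; split.
  by case=> H1 H2 p [] ?; [apply: H1 | apply: H2].
by move=> H; split=> p hp; apply: H; [left | right].
Qed.

Lemma translate_closed (F : {mpoly k[n]} -> Prop) :
  (forall p, F p -> homogeneous p) ->
  pclosed (fun y : proj k n => forall c, c != 0 -> zs F (val y *m rS c)).
Proof.
move=> hF; exists (fun p => exists c p0, [/\ c != 0, F p0 & p = p0 \mPo Lt (rS c)]).
split.
  move=> p [c [p0 [_ Fp0 ->]]]; case/homogP': (hF _ Fp0) => d hd.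
  exact: homogI (comp_homog hd (Lt_homog _)).
move=> x; split.
  by move=> H p [c [p0 [c0 Fp0 ->]]]; rewrite Lt_eval; apply: H.
move=> H c c0 p0 Fp0; rewrite -Lt_eval; apply: H; by exists c, p0.
Qed.
End Translate.

Section Main.
Variables (k : closedFieldType) (n r : nat) (w : 'I_n -> 'I_r -> int) (P : 'M[k]_n)
  (s : 'I_r -> int) (X : pset k n) (I : finType) (Xi : I -> pset k n).
Hypotheses (PU : P \in unitmx) (TI : T_invariant w P X)
  (comp : forall i, irr_component (Xi i) X) (cover : forall x, X x <-> exists i, Xi i x).
Notation rS := (rhoS w P s).

Lemma val_neq0 (y : proj k n) : val y != 0.
Proof. by case/andP: (valP y). Qed.

Lemma rep_self (y : proj k n) : rep (val y) y.
Proof. by case/andP: (valP y) => h /eqP e; split. Qed.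

Lemma rep_uniq v (y1 y2 : proj k n) : rep v y1 -> rep v y2 -> y1 = y2.
Proof. by case=> _ e1 [_ e2]; apply: val_inj; rewrite -e1 -e2. Qed.

Lemma Xi_closed i : pclosed (Xi i).
Proof. by case: (comp i) => [[]]. Qed.

Lemma Xi_sub i : psub (Xi i) X.
Proof. by case: (comp i). Qed.

Definition G j (y : proj k n) c := forall y', rep (val y *m rS c) y' -> Xi j y'.

Lemma G_zs j F y c : c != 0 ->
  (forall p, F p -> homogeneous p) ->
  (forall x : proj k n, Xi j x <-> (forall p, F p -> p.@[fun i => val x 0 i] = 0)) ->
  (G j y c <-> zs F (val y *m rS c)).
Proof.
move=> c0 hF hX.
have nz : val y *m rS c != 0 by apply: mulrho_neq0 => //; [apply: torusS | apply: val_neq0].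
case: (proj_exists nz) => y' hy'; split.
  by move=> H; apply/(proj1 (closed_rep hF hX hy')); apply: H.
by move=> H y'' hy''; rewrite (rep_uniq hy'' hy'); apply/(proj2 (closed_rep hF hX hy')).
Qed.

Lemma pigeon (y : proj k n) :
  (forall c, c != 0 -> exists j, G j y c) ->
  exists j, forall l : seq k, exists c, [/\ c \notin l, c != 0 & G j y c].
Proof.
move=> H; apply: NNPP => ne.
have Hl : forall J : seq I, exists L : seq k, forall j, j \in J -> forall c,
    c \notin L -> c != 0 -> ~ G j y c.
  elim=> [|j J [L HL]]; first by exists [::].
  have : ~ forall l : seq k, exists c, [/\ c \notin l, c != 0 & G j y c].
    by move=> h; apply: ne; exists j.
  move/not_all_ex_not => [l hl].
  exists (l ++ L) => j' j'J c; rewrite mem_cat negb_or => /andP [cl cL] c0.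
  move: j'J; rewrite inE => /orP [/eqP ->|j'J]; last exact: HL.
  by move=> g; apply: hl; exists c.
case: (Hl (enum I)) => L HL; case: (notin_nz L) => c [cL c0].
case: (H c c0) => j g; exact: (HL j (mem_enum _ _) c cL c0 g).
Qed.

Lemma comp_inv i y c y' : Xi i y -> c != 0 -> rep (val y *m rS c) y' -> Xi i y'.
Proof.
have step1 : forall y, Xi i y -> exists j, forall c, c != 0 -> G j y c.
  move=> z Xz.
  have H : forall c, c != 0 -> exists j, G j z c.
    move=> c1 c10.
    have nz : val z *m rS c1 != 0.
      by apply: mulrho_neq0 => //; [apply: torusS | apply: val_neq0].
    case: (proj_exists nz) => z' hz'.
    have : X z' by apply: (TI (torusS s c10) (Xi_sub Xz) hz').
    case/cover => j hj; exists j => z'' hz''; by rewrite (rep_uniq hz'' hz').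
  case: (pigeon H) => j Hj; exists j.
  case: (Xi_closed j) => F [hF hX].
  move=> c1 c10; apply/(proj2 (G_zs z c10 hF hX)).
  apply: (orbit_zero PU hF) => // l; case: (Hj l) => c2 [c2l c20 g].
  by exists c2; split=> //; apply/(proj1 (G_zs z c20 hF hX)).
have Zc : forall j, pclosed (fun y => Xi i y /\ forall c, c != 0 -> G j y c).
  move=> j; case: (Xi_closed j) => F [hF hX].
  apply: pclosed_ext (pclosedI (Xi_closed i) (translate_closed w P s hF)) => z.
  split=> [] [h1 h2]; split=> // c1 c10.
    by apply/(proj2 (G_zs z c10 hF hX)); apply: h2.
  by apply/(proj1 (G_zs z c10 hF hX)); apply: h2.
have [j hj] : exists j, psub (Xi i) (fun y => Xi i y /\ forall c, c != 0 -> G j y c).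
  case: (comp i) => irr _ _; apply: irr_finU => // z Xz.
  by case: (step1 z Xz) => j h; exists j.
have sij : psub (Xi i) (Xi j).
  move=> z /hj [_ h]; apply: (h 1 (oner_neq0 _)).
  by rewrite rhoS1 // mulmx1; apply: rep_self.
have sji : psub (Xi j) (Xi i).
  case: (comp i) => _ _; apply => //; first by case: (comp j).
  exact: Xi_sub.
move=> Xy c0 hy'; apply: sji; case: (hj _ Xy) => _ h; exact: (h c c0 y' hy').
Qed.

Lemma comp_lim i z f : Xi i z -> lim0 w P s z f -> Xi i f.
Proof.
case: (Xi_closed i) => F [hF hX]; apply: (limit_closed hF hX) => y Xy c c0.
apply/(proj1 (G_zs y c0 hF hX)) => y' hy'; exact: comp_inv Xy c0 hy'.
Qed.

Lemma cc_rcons Z fs f : chain_closure w P s Z (rcons fs f) =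
  pclosure (fun z => chain_closure w P s Z fs z /\ BBstratum w P s Z f z).
Proof. by rewrite /chain_closure foldl_rcons. Qed.

Lemma cc_sub Z : pclosed Z -> forall fs, psub (chain_closure w P s Z fs) Z.
Proof.
move=> cZ; elim/last_ind => [|fs f IH] //; rewrite cc_rcons.
by apply: pclosure_min => // z [/IH].
Qed.

Lemma pclosure_ext (A B : pset k n) : (forall x, A x <-> B x) ->
  forall x, pclosure A x <-> pclosure B x.
Proof. by move=> e x; split; apply: pclosure_mono => z /e. Qed.

Lemma cc_decomp fs x : chain_closure w P s X fs x <-> exists i, chain_closure w P s (Xi i) fs x.
Proof.
elim/last_ind: fs x => [|fs f IH] x; first exact: cover.
rewrite cc_rcons.
have e : forall z, (chain_closure w P s X fs z /\ BBstratum w P s X f z) <->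
    exists i, chain_closure w P s (Xi i) fs z /\ BBstratum w P s (Xi i) f z.
  move=> z; split.
    case=> /IH [i hi] [_ hl]; exists i; split=> //; split=> //.
    exact: (cc_sub (Xi_closed i) hi).
  case=> i [hi [Xz hl]]; split; first by apply/IH; exists i.
  by split=> //; apply: Xi_sub Xz.
rewrite (pclosure_ext e) pclosure_finU.
by split=> [] [i h]; exists i; move: h; rewrite cc_rcons.
Qed.

Lemma cc_fixed Z : pclosed Z -> (forall z f, Z z -> lim0 w P s z f -> Z f) ->
  forall fs, (exists x, chain_closure w P s Z fs x) -> forall f, f \in fs -> Z f.
Proof.
move=> cZ Zl; elim/last_ind => [|fs g IH] // [x]; rewrite cc_rcons.
case/pclosure_ne => z [cz [Zz hl]] f; rewrite mem_rcons inE => /orP [/eqP ->|ffs].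
  exact: Zl hl.
by apply: IH => //; exists z.
Qed.
End Main.

Unset Implicit Arguments.
Theorem corollary3p1 (k : closedFieldType) (n r : nat)
    (w : 'I_n -> 'I_r -> int) (P : 'M[k]_n) (s : 'I_r -> int)
    (X : pset k n) (I : finType) (Xi : I -> pset k n) :
  P \in unitmx ->
  pclosed X ->
  T_invariant w P X ->
  (exists l : seq (proj k n), forall x, T_fixed w P X x -> x \in l) ->
  (forall x, S_fixed w P s X x <-> T_fixed w P X x) ->
  (forall i, irr_component (Xi i) X) ->
  (forall x, X x <-> exists i, Xi i x) ->
  forall sigma : pset k n,
    Delta w P s X sigma <-> exists i, Delta w P s (Xi i) sigma.
Proof.
move=> PU _ TI _ _ comp cover sigma; split.
  case=> fs [[fne uq Sf [x cx]] hsig].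
  case/(cc_decomp w P s comp cover): cx => i cx.
  exists i, fs; split=> //; split=> //; last by exists x.
  move=> f ffs; split; last by case: (Sf f ffs).
  apply: (cc_fixed (Xi_closed comp i) _ (ex_intro _ x cx) ffs).
  move=> z g; exact: (comp_lim PU TI comp cover).
case=> i [fs [[fne uq Sf [x cx]] hsig]].
exists fs; split=> //; split=> //.
  move=> f ffs; case: (Sf f ffs) => h1 h2; split=> //.
  exact: (Xi_sub comp h1).
by exists x; apply/(cc_decomp w P s comp cover); exists i.
Qed.
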